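(* Let $m$ be a positive integer, $r$ an odd prime, and $p\ge 3$ a prime which is a primitive root modulo $r^m$. Let $q=p^{\phi(r^m)}$ and $f(x)=\mathrm{Tr}_{q/p}\big(x^{(q-1)/r^m}\big)$ for $x\in\mathbb{F}_q$. Then: (i) the partition $\{D^*_{f,i}\}_{i\in f(\mathbb{F}_q^* )}$ induces a $2$-class association scheme if and only if $|f(\mathbb{F}_q^* )|=2$, and this holds if and only if $m=1$ or $r\equiv 1\pmod p$; (ii) the partition $\{D^*_{f,i}\}_{i\in f(\mathbb{F}_q^* )}$ induces a $3$-class association scheme if and only if $|f(\mathbb{F}_q^* )|=3$, and this holds if and only if $m>1$ and $r\not\equiv 1\pmod p$.
   Context: $\phi$ is Euler's function and $\mathrm{Tr}_{q/p}$ the trace from $\mathbb{F}_q$ to $\mathbb{F}_p$. For $i\in\mathbb{F}_p$, $D_{f,i}=\{x\in\mathbb{F}_q:f(x)=i\}$, $D^*_{f,i}=D_{f,i}\setminus\{0\}$, $f(\mathbb{F}_q^* )=\{f(x):x\ne0\}$. Relations on $\mathbb{F}_q$: the diagonal $R_{-1}$, and for $i\in f(\mathbb{F}_q^* )$, $(\alpha,\beta)\in R_i$ iff $\alpha-\beta\in D^*_{f,i}$. The partition induces a $d$-class association scheme if these relations form a symmetric association scheme on $\mathbb{F}_q$ (each relation symmetric, and for any three relations $R_a,R_b,R_c$ the number $|\{w:(u,w)\in R_a,(w,v)\in R_b\}|$ is constant over $(u,v)\in R_c$) and $d=|f(\mathbb{F}_q^* )|$. *)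

(* Defs.v *)
From HB Require Import structures.
From mathcomp Require Import all_boot all_order all_algebra all_field.
Set Implicit Arguments. Unset Strict Implicit. Unset Printing Implicit Defensive.
Import GRing.Theory.
Local Open Scope ring_scope.

Definition primitive_root_mod (a n : nat) : Prop :=
  coprime a n /\ (a ^ totient n = 1 %[mod n])%N /\
  (forall k : nat, (0 < k)%N -> (a ^ k = 1 %[mod n])%N -> (totient n <= k)%N).

(* Absolute trace from F (of characteristic p, #|F| = p^n) to its prime field:
   Tr(x) = sum_{i<n} x^(p^i). Its values lie in the prime subfield of F,
   which we identify with F_p. *)
Definition abs_trace (F : finFieldType) (p n : nat) (x : F) : F :=
  \sum_(i < n) x ^+ (p ^ i).

Definition sym_assoc_scheme (T K : finType) (S : {set K}) (R : K -> rel T) : Prop :=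
  (forall k, k \in S -> forall x y, R k x y = R k y x) /\
  (forall a b c, a \in S -> b \in S -> c \in S ->
     forall u v u' v', R c u v -> R c u' v' ->
       #|[set w | R a u w && R b w v]| = #|[set w | R a u' w && R b w v']|).

Definition image_nonzero (F : finFieldType) (f : F -> F) : {set F} :=
  [set f x | x in [set y : F | y != 0]].

(* Index set {-1} ∪ f(F_q^* ), with None standing for the index -1. *)
Definition scheme_index (F : finFieldType) (f : F -> F) : {set option F} :=
  [set k : option F | if k is Some i then i \in image_nonzero f else true].

(* R_{-1} is the diagonal; R_i = {(a,b) : a - b in D^*_{f,i}}. *)
Definition scheme_rel (F : finFieldType) (f : F -> F) (k : option F) : rel F :=
  fun a b => match k with
             | None => a == b
             | Some i => (a - b != 0) && (f (a - b) == i)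
             end.

Definition induces_dclass_scheme (F : finFieldType) (f : F -> F) (d : nat) : Prop :=
  sym_assoc_scheme (scheme_index f) (scheme_rel f) /\ d = #|image_nonzero f|.

(* Main.v *)
Require Import Defs.
From HB Require Import structures.
From mathcomp Require Import all_boot all_order all_algebra all_field.
From mathcomp Require Import cyclic zify.
From mathcomp.algebra_tactics Require Import ring.
Set Implicit Arguments. Unset Strict Implicit. Unset Printing Implicit Defensive.
Import GRing.Theory.
Local Open Scope ring_scope.

Section Counting.
Variables (F : finFieldType) (K : {set F}).
Hypotheses (K0 : 0 \in K) (K1 : 1 \in K)
  (KB : forall a b, a \in K -> b \in K -> a - b \in K)
  (KM : forall a b, a \in K -> b \in K -> a * b \in K)
  (KV : forall a, a \in K -> a^-1 \in K)
  (Kcard : (#|F| <= #|K| * #|K|)%N).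

Lemma KN a : a \in K -> - a \in K. Proof. by move=> Ka; rewrite -sub0r KB. Qed.
Lemma KD a b : a \in K -> b \in K -> a + b \in K.
Proof. by move=> Ka Kb; rewrite -[b]opprK KB // KN. Qed.

Definition invK (C : {set F}) := forall k z, k \in K -> k != 0 -> (k * z \in C) = (z \in C).

Definition L x := [set k * x | k in K].

Lemma memL x z : reflect (exists2 k, k \in K & z = k * x) (z \in L x).
Proof. exact: imsetP. Qed.

Lemma card_L x (P : pred F) : x != 0 -> #|[set z in L x | P z]| = #|[set k in K | P (k * x)]|.
Proof.
move=> x0.
have -> : [set z in L x | P z] = (fun k => k * x) @: [set k in K | P (k * x)].
  apply/setP=> z; rewrite !inE; apply/andP/imsetP.
  - by case=> /imsetP [k Kk ->] Pk; exists k; rewrite // inE Kk.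
  - by case=> k; rewrite inE => /andP[Kk Pk] ->; split => //; apply/imsetP; exists k.
by rewrite card_imset //; apply: mulIf.
Qed.

Lemma capL (C : {set F}) x x' : invK C -> x != 0 -> x' != 0 -> (x \in C) = (x' \in C) ->
  #|C :&: L x| = #|C :&: L x'|.
Proof.
move=> iC x0 x'0 eC.
have E y : C :&: L y = [set z in L y | z \in C] by apply/setP=> z; rewrite !inE andbC.
rewrite !E !card_L //; apply: eq_card => k; rewrite !inE.
have [->|k0] := eqVneq k 0; first by rewrite !mul0r.
by case Kk: (k \in K) => //=; rewrite !iC.
Qed.

Lemma span x z : x != 0 -> z \notin L x -> forall b, exists a c, [/\ a \in K, c \in K & b = a * x + c * z].
Proof.
move=> x0 zL b.
pose psi (ac : F * F) := ac.1 * x + ac.2 * z.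
have inj : {in setX K K &, injective psi}.
  move=> [a c] [a' c'] /setXP[/= Ka Kc] /setXP[/= Ka' Kc'] /= E.
  have H : (a - a') * x - (c' - c) * z = 0.
    have -> : (a - a') * x - (c' - c) * z = psi (a, c) - psi (a', c') by rewrite /psi /=; ring.
    by rewrite E subrr.
  have cc : c = c'.
    apply/eqP; apply/negPn/negP => ne.
    have ne' : c' - c != 0 by rewrite subr_eq0 eq_sym.
    case/negP: zL; apply/memL; exists ((a - a') / (c' - c)).
      by rewrite KM ?KV ?KB.
    move/eqP: H; rewrite subr_eq0 => /eqP H.
    by rewrite mulrAC H mulrAC mulfV // mul1r.
  subst c'; move: H; rewrite subrr mul0r subr0 => /eqP; rewrite mulf_eq0 (negbTE x0) orbF subr_eq0.
  by move/eqP->.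
have : psi @: setX K K == [set: F].
  rewrite eqEcard subsetT cardsT card_in_imset // cardsX.
  exact: Kcard.
move/eqP => E.
have : b \in psi @: setX K K by rewrite E inE.
case/imsetP => [[a c]] /setXP [/= Ka Kc] ->.
by exists a, c.
Qed.

Lemma LkE x k : k \in K -> k != 0 -> L (k * x) = L x.
Proof.
move=> Kk k0; apply/setP=> z; apply/memL/memL => [[mu Kmu ->]|[mu Kmu ->]].
  by exists (mu * k); rewrite ?KM // mulrA.
exists (mu / k); first by rewrite KM ?KV.
by rewrite mulrA mulfVK.
Qed.

Lemma key_d (B : {set F}) x z : invK B -> x != 0 -> z \notin L x ->
  muln #|[set k in K | k * x - z \in B]| #|K :\ 0| = #|B :\: L x|.
Proof.
move=> iB x0 zL.
rewrite -cardsX.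
pose phi (kl : F * F) := kl.2 * (kl.1 * x - z).
have phiE kl : phi kl = kl.2 * (kl.1 * x - z) by [].
have inj : {in setX [set k in K | k * x - z \in B] (K :\ 0%R) &, injective phi}.
  move=> [k l] [k' l']; rewrite !inE /=.
  move=> /andP[/andP[Kk _] /andP[l0 Kl]] /andP[/andP[Kk' _] /andP[l0' Kl']].
  rewrite !phiE /= => E.
  have H : (l * k - l' * k') * x - (l - l') * z = 0.
    have -> : (l * k - l' * k') * x - (l - l') * z = l * (k * x - z) - l' * (k' * x - z) by ring.
    by rewrite E subrr.
  have ll : l = l'.
    apply/eqP; apply/negPn/negP => ne.
    have ne' : l - l' != 0 by rewrite subr_eq0.
    case/negP: zL; apply/memL; exists ((l * k - l' * k') / (l - l')).
      by rewrite KM ?KV ?KB ?KM.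
    move/eqP: H; rewrite subr_eq0 => /eqP H.
    by rewrite mulrAC H mulrAC mulfV // mul1r.
  subst l'; move: E => /(mulfI l0) /eqP; rewrite subr_eq addrNK => /eqP /(mulIf x0) ->.
  by [].
rewrite -(card_in_imset inj); apply: eq_card => b; rewrite [in RHS]inE.
apply/imsetP/andP.
  case=> [[k l]]; rewrite !inE /= => /andP[/andP[Kk kB] /andP[l0 Kl]] ->; rewrite phiE /=.
  split; last by rewrite iB.
  apply/memL => -[mu Kmu E]; case/negP: zL; apply/memL.
  exists (k - mu / l); first by rewrite KB // KM ?KV.
  apply: (mulfI l0).
  have -> : l * ((k - mu / l) * x) = l * k * x - (l / l) * mu * x by ring.
  by rewrite mulfV // mul1r -E; ring.
case=> bL Bb.
have [a [c [Ka Kc bE]]] := span x0 zL b.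
have c0 : c != 0.
  apply/eqP => c0; case/negP: bL; apply/memL; exists a => //.
  by rewrite bE c0 mul0r addr0.
exists (- a / c, - c).
  apply/setXP; rewrite !inE /= oppr_eq0 c0 KN //= KM ?KV ?KN //=.
  have -> : - a / c * x - z = (- c)^-1 * b.
    rewrite bE invrN mulrDr !mulNr !mulrA mulVf // mul1r; ring.
  by rewrite iB ?KV ?KN ?invr_eq0 ?oppr_eq0.
rewrite phiE /= bE.
have -> : - c * (- a / c * x - z) = (c / c) * a * x + c * z by ring.
by rewrite mulfV // mul1r.
Qed.

Lemma K1card : (0 < #|K :\ 0%R|)%N.
Proof. by apply/card_gt0P; exists 1; rewrite !inE oner_eq0 K1. Qed.

Section Cnt.
Variables (A B : {set F}).
Hypotheses (iA : invK A) (iB : invK B).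

Definition A0 x := [set z | (z \in A) && (x - z \in B)].
Definition W x := A0 x :\: L x.
Definition NB := [set z | - z \in B].

Lemma iNB : invK NB.
Proof. by move=> k z Kk k0; rewrite !inE -mulrN iB. Qed.

Lemma iAN : invK (A :&: NB).
Proof. by move=> k z Kk k0; rewrite !inE iA // -mulrN iB. Qed.

Lemma W_scale x k : x != 0 -> k \in K -> k != 0 -> #|W (k * x)| = #|W x|.
Proof.
move=> x0 Kk k0.
have -> : W (k * x) = (fun z => k * z) @: W x.
  apply/setP => y; apply/idP/imsetP.
    rewrite /W LkE // !inE => /andP[yL /andP[yA yB]].
    exists (k^-1 * y); last by rewrite mulVKf.
    rewrite !inE; apply/and3P; split.
    - apply: contra yL => /memL[mu Kmu E]; apply/memL; exists (k * mu); first by rewrite KM.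
      by rewrite -mulrA -E mulVKf.
    - by rewrite iA ?KV ?invr_eq0.
    - by rewrite -(iB _ Kk k0) mulrBr mulVKf.
  case=> z; rewrite /W LkE // !inE => /andP[zL /andP[zA zB]] ->.
  apply/and3P; split.
  - apply: contra zL => /memL[mu Kmu E]; apply/memL; exists (k^-1 * mu); first by rewrite KM ?KV.
    by rewrite -mulrA -E mulKf.
  - by rewrite iA.
  - by rewrite -mulrBr iB.
by rewrite card_imset //; apply: mulfI.
Qed.

Lemma part2 x : x != 0 ->
  (#|K :\ 0%R| * (#|K :\ 0%R| * #|W x|) + #|K :\ 0%R| * #|(A :&: NB) :\: L x|
   = #|A :\: L x| * #|B :\: L x|)%N.
Proof.
move=> x0.
set kk1 := #|K :\ 0%R|.
have S1 : (\sum_(k in K :\ 0%R) #|W (k * x)| = kk1 * #|W x|)%N.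
  rewrite (eq_bigr (fun _ => #|W x|)) ?sum_nat_const //.
  by move=> k; rewrite !inE => /andP[k0 Kk]; rewrite W_scale.
have S2 : (\sum_(k in K :\ 0%R) #|W (k * x)| =
    \sum_(z in A :\: L x) #|[set k in K :\ 0%R | (k * x - z)%R \in B]|)%N.
  under eq_bigr do rewrite -sum1_card big_mkcond /=.
  rewrite exchange_big /= [in RHS]big_mkcond /=; apply: eq_bigr => z _.
  case: ifP => zS.
    rewrite -sum1_card -big_mkcondr /=; apply: eq_bigl => k; rewrite !inE.
    case: (k =P 0) => [->|/eqP k0] //=; case Kk: (k \in K) => //=.
    move: zS; rewrite /W LkE // !inE => /andP[-> ->] /=.
    by [].
  rewrite big1 // => k; rewrite !inE => /andP[k0 Kk].
  rewrite LkE //; move: zS; rewrite !inE.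
  by case: (z \in L x); case: (z \in A).
have S3 z : z \in A :\: L x ->
    (kk1 * #|[set k in K :\ 0%R | (k * x - z)%R \in B]| + kk1 * (z \in NB) = #|B :\: L x|)%N.
  rewrite !inE => /andP[zL zA].
  rewrite -(key_d iB x0 zL) -mulnDr mulnC.
  congr (_ * _)%N.
  rewrite (cardsD1 0 [set k in K | k * x - z \in B]) !inE K0 mul0r sub0r /=.
  rewrite addnC; congr (_ + _)%N; apply: eq_card => k; rewrite !inE.
  by rewrite andbA.
rewrite -S1 S2 big_distrr /=.
have -> : (#|(A :&: NB) :\: L x| = \sum_(z in A :\: L x) (z \in NB))%N.
  rewrite -sum1_card big_mkcond [in RHS]big_mkcond /=.
  apply: eq_bigr => z _; rewrite !inE.
  by case: (z \in L x); case: (z \in A); case: (- z \in B).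
rewrite big_distrr /= -big_split /=.
rewrite (eq_bigr (fun _ => #|B :\: L x|)) ?sum_nat_const //.
Qed.

Theorem cnt_eq x x' : x != 0 -> x' != 0 -> (x \in A) = (x' \in A) -> (x \in B) = (x' \in B) ->
  #|A0 x| = #|A0 x'|.
Proof.
move=> x0 x'0 eA eB.
rewrite -(cardsID (L x) (A0 x)) -(cardsID (L x') (A0 x')).
congr (_ + _)%N.
  have E y : A0 y :&: L y = [set z in L y | (z \in A) && (y - z \in B)].
    by apply/setP => z; rewrite !inE andbC.
  rewrite !E !card_L //; apply: eq_card => k; rewrite !inE.
  case Kk: (k \in K) => //=.
  have [->|k0] := eqVneq k 0; first by rewrite !mul0r !subr0 eB.
  rewrite !iA // eA; congr andb.
  have F1 y : y - k * y = (1 - k) * y by rewrite mulrBl mul1r.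
  rewrite !F1; have [->|k1] := eqVneq (1 - k) 0; first by rewrite !mul0r.
  by rewrite !iB ?KB.
have P := part2 x0; have P' := part2 x'0.
have eL (C : {set F}) : invK C -> (x \in C) = (x' \in C) -> #|C :\: L x| = #|C :\: L x'|.
  by move=> iC eC; rewrite !cardsD (capL iC x0 x'0 eC).
rewrite (eL _ iA eA) (eL _ iB eB) (eL _ iAN) in P; last by rewrite !inE eA -(mulN1r x) -(mulN1r x') !iB ?KN ?oppr_eq0 ?oner_eq0 // eB.
rewrite -P' in P.
have := K1card => kp.
move/eqP: P; rewrite eqn_add2r eqn_mul2l (gtn_eqF kp) /= eqn_mul2l (gtn_eqF kp) /=.
by move/eqP.
Qed.
End Cnt.
End Counting.

Section Scheme.
Variables (F : finFieldType) (K : {set F}).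
Hypotheses (K0 : 0 \in K) (K1 : 1 \in K)
  (KB : forall a b, a \in K -> b \in K -> a - b \in K)
  (KM : forall a b, a \in K -> b \in K -> a * b \in K)
  (KV : forall a, a \in K -> a^-1 \in K)
  (Kcard : (#|F| <= #|K| * #|K|)%N).
Variable f : F -> F.
Hypothesis finv : forall k z, k \in K -> k != 0 -> f (k * z) = f z.

Definition Pset (a : option F) := [set z | scheme_rel f a z 0].

Lemma relE a u w : scheme_rel f a u w = (u - w \in Pset a).
Proof. by case: a => [i|] /=; rewrite inE /= ?subr0 // subr_eq0. Qed.

Lemma invP a : invK K (Pset a).
Proof.
move=> k z Kk k0; rewrite !inE; case: a => [i|] /=; rewrite ?subr0 mulf_eq0 (negbTE k0) //=.
by rewrite finv.
Qed.

Lemma cntE a b u v :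
  #|[set w | scheme_rel f a u w && scheme_rel f b w v]| = #|A0 (Pset a) (Pset b) (u - v)|.
Proof.
have -> : A0 (Pset a) (Pset b) (u - v) = (fun w => u - w) @: [set w | scheme_rel f a u w && scheme_rel f b w v].
  apply/setP => z; rewrite inE; apply/idP/imsetP.
    move=> /andP[zA zB]; exists (u - z); last by rewrite subKr.
    by rewrite inE !relE subKr zA /=; have -> : u - z - v = u - v - z by ring.
  case=> w; rewrite inE !relE => /andP[h1 h2] ->.
  by rewrite h1 /=; have -> : u - v - (u - w) = w - v by ring.
by rewrite card_imset //; apply: subrI.
Qed.

Theorem scheme_ok : sym_assoc_scheme (scheme_index f) (scheme_rel f).
Proof.
have KN1 : -1 \in K by rewrite -sub0r KB.
have N10 : (-1 : F) != 0 by rewrite oppr_eq0 oner_eq0.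
split.
  move=> [i|] _ x y /=; last by rewrite eq_sym.
  by rewrite -opprB -mulN1r finv // mulf_eq0 (negbTE N10).
move=> a b c _ _ _ u v u' v' Hc Hc'.
rewrite !cntE.
case: c Hc Hc' => [i|] /=.
  move=> /andP[x0 fx] /andP[x'0 fx'].
  apply: (@cnt_eq F K K0 K1 KB KM KV Kcard _ _ (invP a) (invP b)) => //.
  - by case: a => [j|]; rewrite !inE /= ?subr0 ?(negbTE x0) ?(negbTE x'0) //= (eqP fx) (eqP fx').
  - by case: b => [j|]; rewrite !inE /= ?subr0 ?(negbTE x0) ?(negbTE x'0) //= (eqP fx) (eqP fx').
by move=> /eqP -> /eqP ->; rewrite !subrr.
Qed.
End Scheme.
Section Sums.
Variable F : fieldType.

Lemma geom (y : F) n : (0 < n)%N -> y ^+ n = 1 ->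
  \sum_(0 <= i < n) y ^+ i = if y == 1 then n%:R else 0.
Proof.
move=> n0 yn; case: eqP => [->|/eqP y1].
  by rewrite (eq_bigr (fun _ => 1)) ?sumr_const_nat ?subn0 // => i _; rewrite expr1n.
have := subrX1 y n; rewrite yn subrr big_mkord => /esym /eqP; rewrite mulf_eq0 subr_eq0 (negbTE y1) /=.
by move/eqP.
Qed.

Lemma sum_mult (G : nat -> F) r M : (0 < r)%N ->
  \sum_(0 <= u < r * M | (r %| u)%N) G u = \sum_(0 <= j < M) G (r * j)%N.
Proof.
move=> r0; elim: M => [|M IH]; first by rewrite muln0 !big_geq.
have E : (r * M.+1 = r * M + r)%N by rewrite mulnS addnC.
rewrite big_nat_recr //= -IH E (@big_cat_nat _ _ _ (r * M)) //=; last by rewrite leq_addr.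
congr (_ + _).
have lt : (r * M < r * M + r)%N by rewrite -[X in (X < _)%N]addn0 ltn_add2l.
rewrite big_ltn_cond // dvdn_mulr // big1_seq ?addr0 // => u /andP[ru]; rewrite mem_index_iota => /andP[lo hi].
exfalso; move: ru.
have -> : u = (r * M + (u - r * M))%N by rewrite subnKC // ltnW.
rewrite dvdn_addr ?dvdn_mulr // => /dvdn_leq.
have : (0 < u - r * M < r)%N by rewrite subn_gt0 lo /= ltn_subLR // ltnW.
case/andP => a b /(_ a); rewrite leqNgt b.
by [].
Qed.
End Sums.

Lemma pow_inj (p N : nat) : primitive_root_mod p N -> forall i j, (i < totient N)%N -> (j < totient N)%N ->
  (p ^ i %% N = p ^ j %% N)%N -> i = j.
Proof.
case=> cop [_ mini].
have key i j : (i < j)%N -> (j < totient N)%N -> (p ^ i %% N = p ^ j %% N)%N -> False.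
  move=> ij jN E.
  have p0 : (0 < p)%N.
    move: cop {mini E}; case: p => // ; rewrite /coprime gcd0n => /eqP N1.
    move: jN ij; rewrite N1 (_ : totient 1 = 1%N) //; lia.
  have : (p ^ (j - i) = 1 %[mod N])%N.
    apply/eqP; rewrite eqn_mod_dvd ?expn_gt0 ?p0 //.
    have : (N %| p ^ j - p ^ i)%N.
      rewrite -eqn_mod_dvd; first by rewrite eq_sym; apply/eqP.
      by rewrite leq_pexp2l // ltnW.
    rewrite -(subnKC (ltnW ij)) expnD -{2}(muln1 (p ^ i)%N) -mulnBr Gauss_dvdr //.
    by rewrite addKn.
    by rewrite coprime_sym coprimeXl.
  have ji0 : (0 < j - i)%N by rewrite subn_gt0.
  move/(mini _ ji0)=> le.
  have : (j - i < totient N)%N by apply: leq_ltn_trans (leq_subr _ _) jN.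
  by rewrite ltnNge le.
move=> i j iN jN E; case: (ltngtP i j) => // [ij|ji].
  by case: (key _ _ ij jN E).
by case: (key _ _ ji iN (esym E)).
Qed.

Lemma trace_val (F : finFieldType) (m r p : nat) (y : F) :
  (0 < m)%N -> prime r -> primitive_root_mod p (r ^ m) -> y ^+ (r ^ m) = 1 ->
  abs_trace p (totient (r ^ m)) y =
  (if y == 1 then (r ^ m)%:R else 0) - (if y ^+ r == 1 then (r ^ (m.-1))%:R else 0).
Proof.
move=> m0 pr hp yN.
set N := (r ^ m)%N.
have r0 : (0 < r)%N by apply: prime_gt0.
have N0 : (0 < N)%N by rewrite expn_gt0 r0.
have NE : N = (r * r ^ m.-1)%N by rewrite /N -expnS prednK.
rewrite /abs_trace.
under eq_bigr do rewrite -(expr_mod _ yN).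
pose g (i : 'I_(totient N)) : 'I_N := Ordinal (ltn_pmod (p ^ i) N0).
have ginj : {in [set: 'I_(totient N)] &, injective g}.
  move=> i j _ _ /(congr1 val) /= E; apply: val_inj => /=.
  exact: (pow_inj hp (ltn_ord i) (ltn_ord j) E).
have gim : g @: [set: 'I_(totient N)] = [set u : 'I_N | coprime u N].
  apply/eqP; rewrite eqEcard; apply/andP; split.
    apply/subsetP => u /imsetP [i _ ->]; rewrite inE /= coprime_modl coprimeXl //.
    by case: hp.
  rewrite card_in_imset // cardsT card_ord totient_count_coprime big_mkord.
  rewrite -sum1_card [X in (X <= _)%N]big_mkcond /=.
  by apply: leq_sum => u _; rewrite inE coprime_sym; case: (coprime u N).
have -> : \sum_(i < totient N) y ^+ (p ^ i %% N)%N = \sum_(i < totient N) y ^+ (g i) by [].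
rewrite (eq_bigl (fun i => i \in [set: 'I_(totient N)])); last by move=> i; rewrite in_setT.
rewrite -(big_imset (fun u : 'I_N => y ^+ u) ginj) gim /=.
rewrite (eq_bigl (fun j : 'I_N => ~~ (r %| j)%N)); last first.
  by move=> j; rewrite inE /N coprime_pexpr // coprime_sym prime_coprime.
rewrite -(big_mkord (fun j => ~~ (r %| j)%N) (fun j => y ^+ j)) /=.
have T : \sum_(0 <= u < N) y ^+ u = \sum_(0 <= u < N | (r %| u)%N) y ^+ u + \sum_(0 <= u < N | ~~ (r %| u)%N) y ^+ u.
  by rewrite (bigID (fun u => (r %| u)%N)).
have S1 : \sum_(0 <= u < N | (r %| u)%N) y ^+ u = if y ^+ r == 1 then (r ^ m.-1)%:R else 0.
  rewrite [in LHS]NE sum_mult //.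
  under eq_bigr do rewrite exprM.
  apply: geom; first by rewrite expn_gt0 r0.
  by rewrite -exprM -NE.
rewrite S1 geom // in T.
by rewrite T addrC addKr.
Qed.
Lemma nt (m r p : nat) : (0 < m)%N -> prime r -> odd r -> primitive_root_mod p (r ^ m) ->
  let s := (totient (r ^ m))./2 in
  totient (r ^ m) = (s + s)%N /\ (0 < s)%N /\ (r ^ m %| p ^ s + 1)%N.
Proof.
move=> m0 pr odr [cop [pphi mini]] s.
have r0 : (0 < r)%N by apply: prime_gt0.
have r2 : (2 < r)%N.
  have := prime_gt1 pr; case: r odr {r0 pr cop pphi mini s} => // [[|[|n]]] //.
have phiE : totient (r ^ m) = (r.-1 * r ^ m.-1)%N by rewrite totient_pfactor.
have ev : odd (totient (r ^ m)) = false.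
  by rewrite phiE oddM; move: odr; case: r {r0 r2 pr cop pphi mini s phiE} => //= n /negbTE ->.
have sE : totient (r ^ m) = (s + s)%N.
  by rewrite addnn /s; have := odd_double_half (totient (r ^ m)); rewrite ev add0n.
clearbody s.
have phi0 : (0 < totient (r ^ m))%N by rewrite totient_gt0 expn_gt0 r0.
have s0 : (0 < s)%N by move: phi0; rewrite sE; lia.
split => //; split => //.
have p0 : (0 < p)%N.
  move: cop {mini pphi}; case: (p) => //; rewrite /coprime gcd0n => /eqP N1.
  have : (r ^ m > 1)%N by rewrite -{1}(expn0 r) ltn_exp2l ?prime_gt1.
  by rewrite N1.
have Qm1 : (p ^ s = 1 %[mod r ^ m])%N -> False.
  by move=> /(mini _ s0); rewrite sE; move: s0; clear; lia.
have := pphi; move/eqP; rewrite eqn_mod_dvd ?expn_gt0 ?p0 // sE expnD.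
have : (0 < p ^ s)%N by rewrite expn_gt0 p0.
move: (p ^ s)%N Qm1 => Q Qm1 Q0 dv.
have {dv} dv : (r ^ m %| (Q - 1) * (Q + 1))%N.
  by move: dv; rewrite mulnBl mul1n mulnDr muln1 subnDA addnK.
have [rQ|nrQ] := boolP (r %| Q + 1)%N.
  have nrQ' : ~~ (r %| Q - 1)%N.
    apply/negP => rQ'; have := dvdn_sub rQ rQ'.
    have -> : (Q + 1 - (Q - 1) = 2)%N by clear -Q0; lia.
    by move/dvdn_leq => /(_ isT) r2'; move: r2 r2'; clear; lia.
  by rewrite Gauss_dvdr // in dv; rewrite coprime_pexpl // prime_coprime.
exfalso; apply: Qm1; apply/eqP.
rewrite eqn_mod_dvd // -(Gauss_dvdl _ (_ : coprime (r ^ m) (Q + 1))) //.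
by rewrite coprime_pexpl // prime_coprime.
Qed.

Lemma exists_gen (F : finFieldType) : exists g : F, (#|F|.-1).-primitive_root g.
Proof.
pose rs := enum (predC1 (0 : F)).
have n0 : (0 < #|F|.-1)%N by rewrite -(cardC1 (0:F)); apply/card_gt0P; exists 1; rewrite !inE oner_eq0.
have : has (#|F|.-1).-primitive_root rs.
  apply: has_prim_root => //.
  - apply/allP => x; rewrite mem_enum inE => x0; rewrite unity_rootE.
    apply/eqP; apply: (mulIf x0); rewrite mul1r -exprSr prednK ?expf_card //.
    by apply/card_gt0P; exists 0.
  - exact: enum_uniq.
  - by rewrite -cardE cardC1.
by case/hasP => g _ pg; exists g.
Qed.
Lemma Kprops (F : finFieldType) (p s : nat) : prime p -> (0 < s)%N -> p \in [pchar F] ->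
  #|F| = (p ^ s * p ^ s)%N ->
  let K := [set k : F | k ^+ (p ^ s) == k] in
  [/\ (0 \in K /\ 1 \in K), (forall a b, a \in K -> b \in K -> a - b \in K),
      (forall a b, a \in K -> b \in K -> a * b \in K), (forall a, a \in K -> a^-1 \in K) &
      (#|F| <= #|K| * #|K|)%N].
Proof.
move=> pp s0 pch cardF K; subst K.
have Q0 : (0 < p ^ s)%N by rewrite expn_gt0 prime_gt0.
have pQ : [pchar F].-nat (p ^ s)%N by rewrite pnatX (pnatE _ pp) pch.
split.
- by split; rewrite inE ?expr1n // expr0n gtn_eqF.
- move=> a b; rewrite !inE => /eqP Ha /eqP Hb.
  by rewrite exprDn_pchar // exprNn_pchar // Ha Hb.
- by move=> a b; rewrite !inE => /eqP Ha /eqP Hb; rewrite exprMn Ha Hb.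
- by move=> a; rewrite !inE => /eqP Ha; rewrite exprVn Ha.
have [g pg] := exists_gen F.
set Q := (p ^ s)%N in Q0 cardF pQ *.
have nE : (#|F|.-1 = (Q + 1) * (Q - 1))%N by rewrite cardF; clear -Q0; nia.
have g0 : g != 0.
  have Q1 : (1 < Q)%N by rewrite /Q -{1}(expn0 p) ltn_exp2l // prime_gt1.
  have n0 : (#|F|.-1 != 0)%N by rewrite nE; clear -Q1; nia.
  apply/eqP => g0; have := prim_expr_order pg; rewrite g0 expr0n.
  by move/eqP; rewrite (negbTE n0) /= eq_sym oner_eq0.
pose l := 0 :: [seq g ^+ ((Q + 1) * j) | j <- iota 0 (Q - 1)].
have ul : uniq l.
  rewrite /= map_inj_in_uniq ?iota_uniq ?andbT.
    apply/mapP => -[j _] /eqP; rewrite eq_sym expf_eq0 (negbTE g0) andbF.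
    by [].
  move=> i j; rewrite !mem_iota !add0n => /andP[_ hi] /andP[_ hj] /eqP.
  rewrite (eq_prim_root_expr pg) nE !modn_small ?ltn_pmul2l ?addn1 //.
  by rewrite eqn_pmul2l // => /eqP.
have lK : {subset l <= [set k : F | k ^+ Q == k]}.
  move=> k; rewrite inE => /predU1P [->|/mapP [j _ ->]]; first by rewrite inE expr0n gtn_eqF.
  have kq : (g ^+ ((Q + 1) * j)) ^+ Q.-1 = 1.
    by rewrite -exprM mulnAC -subn1 -nE exprM (prim_expr_order pg) expr1n.
  have kQ (x : F) : x ^+ Q = x * x ^+ Q.-1 by rewrite -exprS prednK.
  by rewrite inE kQ kq mulr1.
have sl : size l = Q by rewrite /= size_map size_iota; clear -Q0; lia.
have : (size l <= #|[set k : F | k ^+ Q == k]|)%N.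
  by rewrite -(card_uniqP ul); apply/subset_leq_card/subsetP => x /lK.
rewrite sl.
by rewrite cardF => QK; apply: leq_mul.
Qed.

Lemma gen_iff (P : Prop) (X : nat) : P ->
  (P /\ 2%N = X <-> X = 2%N) /\ (P /\ 3%N = X <-> X = 3%N).
Proof.
move=> HP; split; split; [by case=> _ -> | by move=> H; split => //; rewrite H | by case=> _ -> | by move=> H; split => //; rewrite H].
Qed.

Unset Implicit Arguments.

Theorem proposition4p6 (m r p : nat) (F : finFieldType) :
  (0 < m)%N -> prime r -> odd r -> prime p -> (3 <= p)%N ->
  primitive_root_mod p (r ^ m) ->
  p \in [pchar F] ->
  #|F| = (p ^ totient (r ^ m))%N ->
  let q := (p ^ totient (r ^ m))%N in
  let f := fun x : F => abs_trace p (totient (r ^ m)) (x ^+ ((q - 1) %/ r ^ m)) in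
  ((induces_dclass_scheme f 2 <-> #|image_nonzero f| = 2%N) /\
   (#|image_nonzero f| = 2%N <-> (m = 1%N \/ (r = 1 %[mod p])%N))) /\
  ((induces_dclass_scheme f 3 <-> #|image_nonzero f| = 3%N) /\
   (#|image_nonzero f| = 3%N <-> ((1 < m)%N /\ (r != 1 %[mod p])%N))).
Proof.
move=> m0 pr odr pp p3 hp pch cardF q f.
have [sE [s0 dvQ]] := nt m0 pr odr hp.
set s := (totient (r ^ m))./2 in sE s0 dvQ.
have cardQ : #|F| = (p ^ s * p ^ s)%N by rewrite cardF sE expnD.
have [[K0 K1] KB KM KV Kc] := Kprops pp s0 pch cardQ.
set K := [set k : F | k ^+ (p ^ s) == k] in K0 K1 KB KM KV Kc.
have Q0 : (0 < p ^ s)%N by rewrite expn_gt0 prime_gt0.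
have qE : q = (p ^ s * p ^ s)%N by rewrite /q sE expnD.
have eE : ((q - 1) %/ r ^ m = (p ^ s - 1) * ((p ^ s + 1) %/ r ^ m))%N.
  rewrite muln_divA // qE; congr (_ %/ _)%N.
  move: Q0; move: (p ^ s)%N => Q Q0; clear -Q0; nia.
have finv : forall k z, k \in K -> k != 0 -> f (k * z) = f z.
  move=> k z; rewrite inE => /eqP kQ k0.
  have k1 : k ^+ (p ^ s - 1) = 1.
    apply: (mulIf k0); rewrite mul1r -exprSr subn1 prednK //.
  by rewrite /f exprMn eE exprM k1 expr1n mul1r.
have scheme := scheme_ok K0 K1 KB KM KV Kc finv.
set e := ((q - 1) %/ r ^ m)%N in eE *.
have r1 : (1 < r)%N by apply: prime_gt1.
have N0 : (0 < r ^ m)%N by rewrite expn_gt0 ltnW.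
have dq : (r ^ m %| q - 1)%N.
  rewrite qE; have -> : (p ^ s * p ^ s - 1 = (p ^ s - 1) * (p ^ s + 1))%N.
    by move: Q0; move: (p ^ s)%N => Q Q0; clear -Q0; nia.
  exact: dvdn_mull.
have eN : (e * r ^ m = #|F|.-1)%N by rewrite divnK // /q -cardF subn1.
have xn (x : F) : x != 0 -> x ^+ #|F|.-1 = 1.
  move=> x0; apply: (mulIf x0); rewrite mul1r -exprSr prednK ?expf_card //.
  by apply/card_gt0P; exists 0.
have yN (x : F) : x != 0 -> (x ^+ e) ^+ (r ^ m) = 1 by move=> x0; rewrite -exprM eN xn.
have [g pg] := exists_gen F.
have n0 : (0 < #|F|.-1)%N by rewrite -(cardC1 (0:F)); apply/card_gt0P; exists 1; rewrite !inE oner_eq0.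
have g0 : g != 0.
  apply/eqP => g0; have := prim_expr_order pg; rewrite g0 expr0n.
  by move/eqP; rewrite (gtn_eqF n0) /= eq_sym oner_eq0.
have gne (i : nat) : (0 < i < #|F|.-1)%N -> g ^+ i != 1.
  case/andP => i0 ilt; rewrite -(prim_order_dvd pg); apply/negP => /(dvdn_leq i0).
  by rewrite leqNgt ilt.
have e0 : (0 < e)%N by move: n0; rewrite -eN muln_gt0 => /andP[].
set a : F := (r ^ m.-1)%:R.
have mE : (r ^ m = r * r ^ m.-1)%N by rewrite -expnS prednK.
have memI t : (t \in image_nonzero f) = [|| t == (r ^ m)%:R - a, t == - a | (1 < m)%N && (t == 0)].
  apply/imsetP/idP.
    case=> x; rewrite inE => x0 ->; rewrite /f -/e trace_val ?yN //.
    case E1: (x ^+ e == 1).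
      by rewrite (eqP E1) expr1n eqxx /= -/a eqxx.
    case E2: ((x ^+ e) ^+ r == 1).
      by rewrite /= sub0r -/a eqxx orbT.
    rewrite subr0 eqxx andbT; apply/orP; right; apply/orP; right.
    rewrite ltn_neqAle m0 andbT; apply/negP => /eqP m1.
    have rr : r = (r ^ m)%N by rewrite -m1 expn1.
    by move: E2; rewrite {1}rr yN ?eqxx.
  case/or3P => [/eqP->|/eqP->|/andP[m1 /eqP->]].
  - exists 1; first by rewrite inE oner_eq0.
    by rewrite /f -/e expr1n trace_val ?expr1n ?eqxx // ?oner_eq0 //; rewrite -(expr1n F (r ^ m)).
  - exists (g ^+ (r ^ m.-1)); first by rewrite inE expf_neq0.
    have R0 : (0 < r ^ m.-1)%N by rewrite expn_gt0 ltnW.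
    rewrite /f -/e trace_val //; last by rewrite yN ?expf_neq0.
      have h1 : (0 < r ^ m.-1 * e < #|F|.-1)%N.
        rewrite -eN mE; move: R0 e0 r1; move: (r ^ m.-1)%N => R; clear; nia.
      have h2 : (r ^ m.-1 * e * r = #|F|.-1)%N by rewrite -eN mE; clear; nia.
      by rewrite -!exprM (negbTE (gne _ h1)) h2 (prim_expr_order pg) eqxx sub0r.
  - exists g; first by rewrite inE.
    rewrite /f -/e trace_val //; last by rewrite yN.
      have rm : (r < r ^ m)%N by rewrite -{1}(expn1 r) ltn_exp2l.
      have h1 : (0 < e < #|F|.-1)%N.
        rewrite -eN; move: e0 rm r1; move: (r ^ m)%N => M; clear; nia.
      have h2 : (0 < e * r < #|F|.-1)%N.
        rewrite -eN; move: e0 rm r1; move: (r ^ m)%N => M; clear; nia.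
      by rewrite -!exprM (negbTE (gne _ h1)) (negbTE (gne _ h2)) subr0.
have copr : coprime p r by case: hp => c _; move: c; rewrite coprime_pexpr.
have ndiv k : ~~ (p %| r ^ k)%N by rewrite -prime_coprime // coprimeXr.
have a0 : a != 0 by rewrite /a -(dvdn_pcharf pch) ndiv.
have t1z : ((r ^ m)%:R - a == 0 :> F) = (p %| r - 1)%N.
  rewrite /a -natrB; last by rewrite mE leq_pmull // ltnW.
  have -> : (r ^ m - r ^ m.-1 = (r - 1) * r ^ m.-1)%N by rewrite mE mulnBl mul1n.
  rewrite -(dvdn_pcharf pch) Gauss_dvdl //.
  by rewrite coprimeXr.
have t12 : (r ^ m)%:R - a != - a.
  apply/eqP => H; have : (r ^ m)%:R = 0 :> F by rewrite -(subrK a (r ^ m)%:R) H addNr.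
  by move/eqP; rewrite -(dvdn_pcharf pch) (negbTE (ndiv m)).
have t20 : - a != 0 by rewrite oppr_eq0.
have cardI : #|image_nonzero f| = (if (1 < m)%N && ~~ (p %| r - 1)%N then 3 else 2)%N.
  case: (ltnP 1 m) => m1 /=.
    case: (boolP (p %| r - 1)%N) => pr1 /=.
      have -> : image_nonzero f = [set - a; 0].
        apply/setP => t; rewrite memI !inE m1 /=.
        rewrite -t1z in pr1; rewrite (eqP pr1). by case: (t == 0); case: (t == - a).
      by rewrite cards2 t20.
    have -> : image_nonzero f = ((r ^ m)%:R - a) |: [set - a; 0].
      apply/setP => t; rewrite memI !inE m1 /=.
      by [].
    rewrite cardsU1 cards2 t20 !inE negb_or t12 /=.
    by rewrite -t1z in pr1; rewrite pr1.
  have -> : image_nonzero f = [set (r ^ m)%:R - a; - a].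
    apply/setP => t; rewrite memI !inE.
    by rewrite ltnNge m1 /= orbF.
  by rewrite cards2 t12.
have rmod : (r == 1 %[mod p])%N = (p %| r - 1)%N by rewrite eqn_mod_dvd // ltnW.
rewrite /induces_dclass_scheme cardI.
have m1E : (m = 1)%N <-> ~~ (1 < m)%N by split => [->//|]; move: m0; clear; lia.
have rmodP : (r = 1 %[mod p])%N <-> (p %| r - 1)%N by rewrite -rmod; split => /eqP.
case: (boolP (1 < m)%N) => m1; case: (boolP (p %| r - 1)%N) => pr1 /=;
  have [G2 G3] := gen_iff 2 scheme; have [G2' G3'] := gen_iff 3 scheme; (split; split => //).
- by split => // _; right; apply/rmodP.
- by split; [case | case=> _; rewrite rmod pr1].
- by split; [case | case=> [/m1E|/rmodP]; [rewrite m1 | rewrite (negbTE pr1)]].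
- by split => // _; split => //; rewrite rmod.
- by split => // _; left; apply/m1E.
- by split; [case | case=> H _; exfalso; move/negP: m1; apply].
- by split => // _; left; apply/m1E.
- by split; [case | case=> H _; exfalso; move/negP: m1; apply].
Qed.
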